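(* Let $n\ge 1$. For $i,j\in\{1,\dots,n\}$ let $L_i>0$, $\mu_i>0$, $\theta_i\ge 0$, $\lambda_i\ge 0$ and $\gamma_{ij}\ge 0$ be real numbers with $\gamma_{ii}=0$ and $\gamma_{ij}=\gamma_{ji}$ for all $i,j$. Let $A$ be the $n\times n$ matrix with entries $$A_{ii}=-\Big(\frac{\mu_i}{L_i}+\theta_i+\sum_{j=1}^n\frac{\gamma_{ij}}{L_i}\Big),\qquad A_{ij}=\frac{\gamma_{ij}}{L_j}\quad (i\neq j),$$ and let $b\in\mathbb{R}^n$ have entries $b_i=\mu_i-\lambda_i$. Then $A$ is invertible and the equilibrium point $y^*=-A^{-1}b$ of the linear system of differential equations $y'(t)=Ay(t)+b$ is a stable equilibrium point.
   Context: The system models the inventory levels $y_i(t)$ of $n$ warehouses in one echelon: $L_i$ is the maximum inventory level, $\mu_i$ the maximum supply rate, $\theta_i$ the deterioration percentage per unit time, $\lambda_i$ the demand rate of warehouse $i$, and $\gamma_{ij}$ the maximum lateral transshipment rate from warehouse $i$ to $j$. Componentwise, $y_i'=(\mu_i-\lambda_i)-\big(\mu_i/L_i+\theta_i+\sum_j\gamma_{ij}/L_i\big)y_i+\sum_j(\gamma_{ij}/L_j)y_j$. *)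

(* Defs.v *)
From HB Require Import structures.
From mathcomp Require Import all_boot all_order all_algebra.
From mathcomp Require Import all_classical all_reals all_analysis.
Set Implicit Arguments. Unset Strict Implicit. Unset Printing Implicit Defensive.
Import Order.TTheory GRing.Theory Num.Theory.
Import numFieldNormedType.Exports.
Local Open Scope classical_set_scope.
Local Open Scope ring_scope.

Definition supnorm (R : realType) (n : nat) (v : 'cV[R]_n) : R :=
  \big[Num.max/0]_(i < n) `|v i ord0|.

Definition is_solution (R : realType) (n : nat) (A : 'M[R]_n) (b : 'cV[R]_n)
  (y : R -> 'cV[R]_n) : Prop :=
  (forall i : 'I_n, (fun s => y s i ord0) x @[x --> 0^'+] --> y 0 i ord0) /\
  (forall t : R, 0 < t -> forall i : 'I_n,
     derivable (fun s => y s i ord0) t 1 /\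
     derive1 (fun s => y s i ord0) t = (A *m y t + b) i ord0).

Definition stable_equilibrium (R : realType) (n : nat) (A : 'M[R]_n)
  (b : 'cV[R]_n) (ys : 'cV[R]_n) : Prop :=
  A *m ys + b = 0 /\
  forall eps : R, 0 < eps -> exists2 delta : R, 0 < delta &
    forall y, is_solution A b y -> supnorm (y 0 - ys) < delta ->
      forall t : R, 0 <= t -> supnorm (y t - ys) < eps.

Definition inventory_matrix (R : realType) (n : nat)
  (L mu theta : 'I_n -> R) (gamma : 'I_n -> 'I_n -> R) : 'M[R]_n :=
  \matrix_(i, j) (if i == j then
                    - (mu i / L i + theta i + \sum_(k < n) gamma i k / L i)
                  else gamma i j / L j).

Definition inventory_vector (R : realType) (n : nat) (mu lambda : 'I_n -> R)
  : 'cV[R]_n := \col_i (mu i - lambda i).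

(* Main.v *)
Set Warnings "-notation-overridden,-ambiguous-paths,-notation-incompatible-prefix".
Require Import Defs.
From HB Require Import structures.
From mathcomp Require Import all_boot all_order all_algebra.
From mathcomp Require Import all_classical all_reals all_analysis.
From mathcomp Require Import ring lra.
Import Order.TTheory GRing.Theory Num.Theory.
Import numFieldNormedType.Exports.
Local Open Scope ring_scope.
Section Alg.
Variables (R : realType) (n : nat) (L mu theta : 'I_n -> R) (gamma : 'I_n -> 'I_n -> R).
Hypotheses (hL : forall i, 0 < L i) (hmu : forall i, 0 < mu i)
  (htheta : forall i, 0 <= theta i)
  (hgamma : forall i j, 0 <= gamma i j) (hgdiag : forall i, gamma i i = 0)
  (hgsym : forall i j, gamma i j = gamma j i).

Let A := inventory_matrix L mu theta gamma.

Lemma AL i j : A i j * L j =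
  gamma i j - (i == j)%:R * (mu i + theta i * L i + \sum_k gamma i k).
Proof.
rewrite /A /inventory_matrix mxE; case: eqP => [<-|_].
  rewrite hgdiag -mulr_suml.
  have := hL i; set l := L i => hl.
  rewrite /= mul1r; field; exact: lt0r_neq0.
rewrite /= mul0r subr0; field; exact/lt0r_neq0/hL.
Qed.

Lemma quad_le (x : 'I_n -> R) :
  \sum_i \sum_j x i * (A i j * L j * x j) <= - \sum_i mu i * x i ^+ 2.
Proof.
have E i : \sum_j x i * (A i j * L j * x j) =
   \sum_j gamma i j * x i * x j - (mu i + theta i * L i + \sum_k gamma i k) * x i ^+ 2.
  set c := mu i + theta i * L i + \sum_k gamma i k.
  rewrite (eq_bigr (fun j => gamma i j * x i * x j - (i == j)%:R * (c * x i * x j))); last first.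
    by move=> j _; rewrite AL -/c; ring.
  rewrite sumrB; congr (_ - _).
  rewrite (bigD1 i) //= eqxx big1 => [|j /negPf]; last first.
    by rewrite eq_sym => ->; rewrite /= mul0r.
  by rewrite /= mul1r addr0; ring.
under eq_bigr do rewrite E.
rewrite sumrB.
have K : \sum_i \sum_j gamma i j * x i * x j <= \sum_i (\sum_k gamma i k) * x i ^+ 2.
  have H2 : 2 * (\sum_i \sum_j gamma i j * x i * x j) <=
      \sum_i \sum_j gamma i j * x i ^+ 2 + \sum_i \sum_j gamma i j * x j ^+ 2.
    rewrite -big_split /= mulr_sumr; apply: ler_sum => i _.
    rewrite -big_split /= mulr_sumr; apply: ler_sum => j _.
    have := hgamma i j; have : 0 <= (x i - x j) ^+ 2 by apply: sqr_ge0.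
    nra.
  have S : \sum_i \sum_j gamma i j * x j ^+ 2 = \sum_i \sum_j gamma i j * x i ^+ 2.
    rewrite exchange_big /=; apply: eq_bigr => i _; apply: eq_bigr => j _.
    by rewrite hgsym.
  rewrite S in H2.
  have -> : \sum_i (\sum_k gamma i k) * x i ^+ 2 = \sum_i \sum_j gamma i j * x i ^+ 2.
    by apply: eq_bigr => i _; rewrite mulr_suml.
  lra.
have T : \sum_i mu i * x i ^+ 2 + \sum_i (\sum_k gamma i k) * x i ^+ 2 <=
   \sum_i (mu i + theta i * L i + \sum_k gamma i k) * x i ^+ 2.
  rewrite -big_split; apply: ler_sum => i _ /=.
  have := mulr_ge0 (mulr_ge0 (htheta i) (ltW (hL i))) (sqr_ge0 (x i)).
  nra.
lra.
Qed.
End Alg.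
Lemma cvg_sum_pt (R : realType) (T : Type) (F : set_system T) (FF : Filter F)
  (n : nat) (g : 'I_n -> T -> R) (l : 'I_n -> R) :
  (forall i, (g i x @[x --> F] --> l i)%classic) ->
  ((\sum_i g i x) @[x --> F] --> \sum_i l i)%classic.
Proof.
move=> hg.
have -> : (fun x => \sum_i g i x) = \sum_i g i by rewrite fct_sumE.
elim/big_ind2: _ => [|f1 l1 f2 l2 h1 h2|i _].
- exact: cvg_cst.
- exact: cvgD.
- exact: hg.
Qed.

Section Ana.
Variables (R : realType) (n : nat) (A : 'M[R]_n) (b ys : 'cV[R]_n) (L : 'I_n -> R).
Hypotheses (hL : forall i, 0 < L i) (heq : A *m ys + b = 0)
  (hQ : forall x : 'I_n -> R, \sum_i \sum_j x i * (A i j * L j * x j) <= 0).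

Definition zf (y : R -> 'cV[R]_n) (i : 'I_n) : R -> R :=
  (fun s => y s i ord0) - cst (ys i ord0).
Definition Vf (y : R -> 'cV[R]_n) : R -> R :=
  \sum_(i < n) ((L i)^-1 \*: (zf y i ^+ 2)).

Lemma VfE y s : Vf y s = \sum_i (L i)^-1 * (y s i ord0 - ys i ord0) ^+ 2.
Proof. by rewrite /Vf fct_sumE. Qed.

Lemma Vf_der y (t : R) : is_solution A b y -> 0 < t ->
  is_derive t 1 (Vf y) (\sum_i (L i)^-1 *: ((2%:R * zf y i t ^+ 1) *:
       ('D_1 (fun s => y s i ord0) t - 0))).
Proof.
move=> [_ hd] t0.
apply: is_derive_sum => i.
apply: is_deriveZ; apply: is_deriveX; apply: is_deriveB.
exact/derivableP/(hd _ t0 i).1.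
Qed.

Lemma Vf_der_le y (t : R) : is_solution A b y -> 0 < t ->
  (\sum_i (L i)^-1 *: ((2%:R * zf y i t ^+ 1) *:
       ('D_1 (fun s => y s i ord0) t - 0))) <= 0.
Proof.
move=> hs t0; have [_ hd] := hs.
have E i : 'D_1 (fun s => y s i ord0) t = \sum_j A i j * (y t j ord0 - ys j ord0).
  rewrite -derive1E (hd _ t0 i).2.
  have -> : A *m y t + b = A *m (y t - ys).
    have hb : b = - (A *m ys) by apply/eqP; rewrite -addr_eq0 addrC heq.
    by rewrite hb mulmxBr.
  by rewrite !mxE; apply: eq_bigr => j _; rewrite !mxE.
have := hQ (fun i => (y t i ord0 - ys i ord0) / L i).
set S := (X in X <= 0 -> _).
suff -> : \sum_i (L i)^-1 *: ((2%:R * zf y i t ^+ 1) *: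
       ('D_1 (fun s => y s i ord0) t - 0)) = 2 * S.
  move=> h; rewrite pmulr_rle0 //.
rewrite /S mulr_sumr; apply: eq_bigr => i _.
have sE : forall a c : R, a *: c = a * c by [].
rewrite E subr0 !sE !mulr_sumr; apply: eq_bigr => j _.
have -> : zf y i t = y t i ord0 - ys i ord0 by [].
rewrite expr1.
have := hL i; have := hL j => hj hi.
field; apply/andP; split; exact: lt0r_neq0.
Qed.

Lemma Vf_nincr y (t : R) : is_solution A b y -> 0 <= t -> Vf y t <= Vf y 0.
Proof.
move=> hs; rewrite le_eqVlt => /predU1P [<-|t0]; first by [].
have hc := hs.1.
have dV x : 0 < x -> derivable (Vf y) x 1.
  move=> x0; have H := @Vf_der y x hs x0; exact: ex_derive.
apply: (@ler0_derive1_le_cc _ (Vf y) 0 t).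
- by move=> x; rewrite in_itv /= => /andP [x0 _]; exact: dV.
- move=> x; rewrite in_itv /= => /andP [x0 _].
  have H := @Vf_der y x hs x0; rewrite derive1E derive_val.
  exact: Vf_der_le.
- apply/continuous_within_itvP => //; split.
  + move=> x; rewrite in_itv /= => /andP [x0 _].
    by apply: differentiable_continuous; apply/derivable1_diffP; exact: dV.
  + have -> : Vf y = fun s => \sum_i (L i)^-1 * (y s i ord0 - ys i ord0) ^+ 2.
      by apply/funext => s; rewrite VfE.
    apply: cvg_sum_pt => i.
    apply: cvgM; first exact: cvg_cst.
    rewrite expr2; apply: cvgM; apply: cvgB; [exact: hc | exact: cvg_cst |exact: hc | exact: cvg_cst].
  + apply: cvg_at_left_filter.
    by apply: differentiable_continuous; apply/derivable1_diffP; exact: dV.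
- by rewrite in_itv /= lexx ltW.
- by rewrite in_itv /= lexx ltW.
- exact: ltW.
Qed.
End Ana.

Lemma le_supnorm (R : realType) (n : nat) (v : 'cV[R]_n) i : `|v i ord0| <= supnorm v.
Proof. by rewrite /supnorm (bigD1 i) //= le_max lexx. Qed.

Theorem proposition2 (R : realType) (n : nat) (hn : (0 < n)%N)
  (L mu theta lambda : 'I_n -> R) (gamma : 'I_n -> 'I_n -> R)
  (hL : forall i, 0 < L i) (hmu : forall i, 0 < mu i)
  (htheta : forall i, 0 <= theta i) (hlambda : forall i, 0 <= lambda i)
  (hgamma : forall i j, 0 <= gamma i j) (hgdiag : forall i, gamma i i = 0)
  (hgsym : forall i j, gamma i j = gamma j i) :
  let A := inventory_matrix L mu theta gamma in
  let b := inventory_vector mu lambda in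
  A \in unitmx /\ stable_equilibrium A b (- (invmx A *m b)).
Proof.
move=> A b.
have hQ := @quad_le R n L mu theta gamma hL htheta hgamma hgdiag hgsym.
have hmu2 (x : 'I_n -> R) : 0 <= \sum_i mu i * x i ^+ 2.
  by apply: sumr_ge0 => i _; apply: mulr_ge0; [exact: ltW | exact: sqr_ge0].
have hU : A \in unitmx.
  rewrite unitmxE unitfE; apply/negP => /det0P [v vn0 vA].
  have := hQ (fun i => v ord0 i).
  have -> : \sum_i \sum_j v ord0 i * (A i j * L j * v ord0 j) = 0.
    rewrite exchange_big /= big1 // => j _.
    have : (v *m A) ord0 j = 0 by rewrite vA mxE.
    rewrite mxE => h.
    transitivity ((\sum_i v ord0 i * A i j) * (L j * v ord0 j)); last by rewrite h mul0r.
    rewrite mulr_suml; by apply: eq_bigr => i _; rewrite /A; ring.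
  move=> h.
  have h0 : \sum_i mu i * v ord0 i ^+ 2 = 0.
    apply/eqP; rewrite eq_le; apply/andP; split; first by rewrite -oppr_ge0.
    exact: hmu2.
  move/negP: vn0; apply; apply/eqP; apply/matrixP => i j; rewrite ord1 !mxE.
  have := @psumr_eq0P _ _ _ (fun i => mu i * v ord0 i ^+ 2) (fun i _ => mulr_ge0 (ltW (hmu i)) (sqr_ge0 (v ord0 i))) h0 j isT.
  by move/eqP; rewrite mulf_eq0 (gt_eqF (hmu j)) sqrf_eq0 => /eqP.
split => //.
set ys := - (invmx A *m b).
have heq : A *m ys + b = 0.
  by rewrite /ys mulmxN mulmxA mulmxV // mul1mx addNr.
split => // eps e0.
have hQ0 (x : 'I_n -> R) : \sum_i \sum_j x i * (A i j * L j * x j) <= 0.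
  have := hQ x; have := hmu2 x; lra.
set K := \sum_i (L i)^-1.
set SL := \sum_i L i.
have K0 : 0 <= K by apply: sumr_ge0 => i _; rewrite invr_ge0 ltW.
have SLi i : L i <= SL.
  rewrite /SL (bigD1 i) //= lerDl; apply: sumr_ge0 => j _; exact: ltW.
set C := 1 + SL * K.
have SL0 : 0 <= SL by apply: le_trans (SLi (Ordinal hn)); exact: ltW.
have C1 : 1 <= C by rewrite /C lerDl mulr_ge0.
have C0 : 0 < C by apply: lt_le_trans C1.
set d := eps / C.
have d0 : 0 < d by rewrite divr_gt0.
have dC : d * C = eps by rewrite /d; field; exact: lt0r_neq0.
exists d => // y hs hy t t0.
have hV := @Vf_nincr R n A b ys L hL heq hQ0 y t hs t0.
have hz0 i : `|y 0 i ord0 - ys i ord0| < d.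
  apply: le_lt_trans hy; have := @le_supnorm R n (y 0 - ys) i; by rewrite !mxE.
have V0 : Vf R n ys L y 0 <= K * d ^+ 2.
  rewrite VfE /K mulr_suml; apply: ler_sum => i _.
  apply: ler_wpM2l; first by rewrite invr_ge0 ltW.
  have := hz0 i; rewrite ltr_norml => /andP [h1 h2]; nra.
rewrite /supnorm; elim/big_ind: _ => [//|x1 x2 h1 h2|i _].
  by rewrite gt_max h1 h2.
have -> : (y t - ys) i ord0 = y t i ord0 - ys i ord0 by rewrite !mxE.
set z := y t i ord0 - ys i ord0.
have Vi : (L i)^-1 * z ^+ 2 <= Vf R n ys L y t.
  rewrite VfE (bigD1 i) //= lerDl; apply: sumr_ge0 => j _.
  by apply: mulr_ge0; [rewrite invr_ge0 ltW | exact: sqr_ge0].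
have hLi := hL i.
have z2 : z ^+ 2 <= L i * (K * d ^+ 2).
  have h := le_trans Vi (le_trans hV V0).
  have := ler_wpM2l (ltW hLi) h.
  by rewrite mulrA mulfV ?mul1r // lt0r_neq0.
have LK : L i * K < C.
  rewrite /C; apply: le_lt_trans (ler_wpM2r K0 (SLi i)) _.
  rewrite -[X in X < _]add0r ltrD2r; exact: ltr01.
have hd2 : 0 < d ^+ 2 by apply: exprn_gt0.
have : L i * K * d ^+ 2 < C * C * d ^+ 2.
  rewrite ltr_pM2r //; apply: lt_le_trans LK _; nra.
have -> : C * C * d ^+ 2 = eps ^+ 2 by rewrite -dC; ring.
rewrite -mulrA => h3.
have z3 : z ^+ 2 < eps ^+ 2 by apply: le_lt_trans z2 h3.
by rewrite -(@ltr_pXn2r _ 2) // ?nnegrE ?ltW // real_normK // num_real.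
Qed.
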